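(* Let $X$ be a rearrangement invariant sequence space such that the discrete Cesàro operator $C$ is bounded on $X$. Then $CX$ is order continuous if and only if $X$ is order continuous.
   Context: A rearrangement invariant sequence space is a Banach space $X$ of real sequences with the ideal property ($|x|\le|y|$ coordinatewise, $y\in X$ imply $x\in X$, $\|x\|_X\le\|y\|_X$), containing a sequence with all coordinates nonzero, with equal norms for equimeasurable sequences. $C(x)_n=\frac1n\sum_{k=1}^nx_k$; $CX=\{x:C(|x|)\in X\}$ with $\|x\|_{CX}=\|C(|x|)\|_X$. A Banach ideal space $Y$ is order continuous if for every $y\in Y$ and every sequence $0\le y^{(n)}\le|y|$ with $y^{(n)}\downarrow0$ coordinatewise, $\|y^{(n)}\|_Y\to0$. *)

(* Defs.v *)
(* Real sequences are functions nat -> R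
   (index 0 corresponds to index 1 of the paper). *)
From HB Require Import structures.
From mathcomp Require Import all_boot all_order all_algebra.
From mathcomp Require Import boolp classical_sets cardinality reals.
Set Implicit Arguments. Unset Strict Implicit. Unset Printing Implicit Defensive.
Import Order.TTheory GRing.Theory Num.Theory.
Local Open Scope ring_scope.
Local Open Scope classical_set_scope.

Section Defs.
Variable R : realType.
Notation seqR := (nat -> R).

Definition is_banach_seq_space (mem : seqR -> Prop) (nrm : seqR -> R) : Prop :=
  mem (fun _ => 0) /\
      (forall x y, mem x -> mem y -> mem (fun n => x n + y n)) /\
      (forall (a : R) x, mem x -> mem (fun n => a * x n)) /\
      (forall x, mem x -> 0 <= nrm x) /\
      (forall x, mem x -> nrm x = 0 -> x = (fun _ => 0)) /\
      (forall (a : R) x, mem x -> nrm (fun n => a * x n) = `|a| * nrm x) /\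
      (forall x y, mem x -> mem y ->
         nrm (fun n => x n + y n) <= nrm x + nrm y) /\
      (forall xs : nat -> seqR, (forall k, mem (xs k)) ->
         (forall e : R, 0 < e -> exists N, forall m k, (N <= m)%N -> (N <= k)%N ->
              nrm (fun n => xs m n - xs k n) < e) ->
         exists x, mem x /\ forall e : R, 0 < e -> exists N, forall k, (N <= k)%N ->
              nrm (fun n => xs k n - x n) < e).

Definition ideal_property (mem : seqR -> Prop) (nrm : seqR -> R) : Prop :=
  forall x y, (forall n, `|x n| <= `|y n|) -> mem y -> mem x /\ nrm x <= nrm y.

Definition equimeasurable (x y : seqR) : Prop :=
  forall lam : R, 0 < lam ->
    card_eq [set n | lam < `|x n|] [set n | lam < `|y n|].

Definition ri_seq_space (mem : seqR -> Prop) (nrm : seqR -> R) : Prop :=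
  [/\ is_banach_seq_space mem nrm,
      ideal_property mem nrm,
      (exists x, mem x /\ forall n, x n != 0) &
      (forall x y, mem y -> equimeasurable x y -> mem x /\ nrm x = nrm y)].

Definition cesaro (x : seqR) : seqR :=
  fun n => (n.+1%:R)^-1 * \sum_(k < n.+1) x k.

Definition absS (x : seqR) : seqR := fun n => `|x n|.

Definition cesaro_bounded (mem : seqR -> Prop) (nrm : seqR -> R) : Prop :=
  (forall x, mem x -> mem (cesaro x)) /\
  exists K : R, forall x, mem x -> nrm (cesaro x) <= K * nrm x.

Definition CX_mem (mem : seqR -> Prop) : seqR -> Prop :=
  fun x => mem (cesaro (absS x)).
Definition CX_norm (nrm : seqR -> R) : seqR -> R :=
  fun x => nrm (cesaro (absS x)).

Definition order_continuous (mem : seqR -> Prop) (nrm : seqR -> R) : Prop :=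
  forall (y : seqR) (ys : nat -> seqR), mem y ->
    (forall k n, 0 <= ys k n /\ ys k n <= `|y n|) ->
    (forall k n, ys k.+1 n <= ys k n) ->
    (forall n (e : R), 0 < e -> exists K, forall k, (K <= k)%N -> ys k n < e) ->
    forall e : R, 0 < e -> exists K, forall k, (K <= k)%N -> nrm (ys k) < e.

End Defs.

(* Main.v *)
Require Import Defs.
From mathcomp Require Import all_boot all_order all_algebra.
From mathcomp Require Import boolp classical_sets cardinality reals.
From mathcomp Require Import ring lra.
Set Implicit Arguments. Unset Strict Implicit. Unset Printing Implicit Defensive.
Import Order.TTheory GRing.Theory Num.Theory.
Local Open Scope ring_scope.
Local Open Scope classical_set_scope.

Section Helpers.
Variable R : realType.
Notation seqR := (nat -> R).

Lemma cesaro_ge0 (f : seqR) n : (forall j, 0 <= f j) -> 0 <= cesaro f n.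
Proof.
move=> h; rewrite /cesaro mulr_ge0 ?invr_ge0 ?ler0n //.
by apply: sumr_ge0 => i _.
Qed.

Lemma cesaro_mono (f g : seqR) n : (forall j, f j <= g j) -> cesaro f n <= cesaro g n.
Proof.
move=> h; rewrite /cesaro; apply: ler_wpM2l; first by rewrite invr_ge0 ler0n.
by apply: ler_sum => i _.
Qed.

Lemma cesaro_le_const (f : seqR) n c : (forall j, (j < n.+1)%N -> f j <= c) ->
  cesaro f n <= c.
Proof.
move=> h; rewrite /cesaro.
have -> : c = (n.+1%:R)^-1 * \sum_(k < n.+1) c.
  rewrite sumr_const card_ord -[c *+ _]mulr_natl mulrA mulVf ?mul1r // pnatr_eq0 //.
apply: ler_wpM2l; first by rewrite invr_ge0 ler0n.
by apply: ler_sum => i _; apply: h.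
Qed.

Lemma noninc_le (f : seqR) : (forall n, f n.+1 <= f n) ->
  forall j n, (j <= n)%N -> f n <= f j.
Proof.
move=> h j n; elim: n => [|n IH]; first by rewrite leqn0 => /eqP ->.
rewrite leq_eqVlt => /orP [/eqP -> //|hj].
exact: le_trans (h n) (IH hj).
Qed.

Lemma cesaro_ge_noninc (f : seqR) n : (forall n, f n.+1 <= f n) ->
  f n <= cesaro f n.
Proof.
move=> h; rewrite /cesaro.
have -> : f n = (n.+1%:R)^-1 * \sum_(k < n.+1) f n.
  rewrite sumr_const card_ord -[f n *+ _]mulr_natl mulrA mulVf ?mul1r // pnatr_eq0 //.
apply: ler_wpM2l; first by rewrite invr_ge0 ler0n.
apply: ler_sum => i _; apply: noninc_le => //.
by rewrite -ltnS.
Qed.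

Lemma unif_finite (ys : nat -> seqR) :
  (forall n (e : R), 0 < e -> exists K, forall k, (K <= k)%N -> ys k n < e) ->
  forall N (e : R), 0 < e -> exists K, forall k, (K <= k)%N ->
     forall j, (j < N)%N -> ys k j < e.
Proof.
move=> h N e he; elim: N => [|N [K IH]]; first by exists 0%N.
have [K' HK'] := h N e he.
exists (maxn K K') => k hk j; rewrite ltnS leq_eqVlt => /orP [/eqP ->|hj].
  by apply: HK'; apply: leq_trans hk; exact: leq_maxr.
by apply: IH => //; apply: leq_trans hk; exact: leq_maxl.
Qed.

End Helpers.
Section Perm.
Variable R : realType.
Variable g : nat -> R.
Hypothesis gpos : forall n, 0 < g n.
Hypothesis gc0 : forall e : R, 0 < e -> exists N, forall n, (N <= n)%N -> g n < e.

Lemma fresh_nat (s : seq nat) : exists a, forall i, i \in s -> (i < a)%N.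
Proof.
elim: s => [|x s [a IH]]; first by exists 0%N.
exists (maxn a x.+1) => i; rewrite inE => /orP [/eqP ->|/IH h].
  by rewrite leq_max leqnn orbT.
by rewrite leq_max h.
Qed.

Lemma argmax_fin (P : nat -> Prop) N : (exists a, (a < N)%N /\ P a) ->
  exists m, [/\ (m < N)%N, P m & forall j, (j < N)%N -> P j -> g j <= g m].
Proof.
elim: N => [[a [//]]|N IH [a [ha Pa]]].
have [PN|nPN] := pselect (P N).
  have [ex|nex] := pselect (exists a, (a < N)%N /\ P a).
    have [m [hm Pm Hm]] := IH ex.
    have [le|lt] := leP (g N) (g m).
      exists m; split => //; first by apply: ltn_trans hm _.
      move=> j; rewrite ltnS leq_eqVlt => /orP [/eqP -> //|hj]; exact: Hm.
    exists N; split => // j; rewrite ltnS leq_eqVlt => /orP [/eqP -> //|hj] Pj.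
    exact: le_trans (Hm _ hj Pj) (ltW lt).
  exists N; split => // j; rewrite ltnS leq_eqVlt => /orP [/eqP -> //|hj] Pj.
  by exfalso; apply: nex; exists j.
have ex : exists a, (a < N)%N /\ P a.
  exists a; split => //; move: ha; rewrite ltnS leq_eqVlt => /orP [/eqP eq|//].
  by rewrite eq in Pa.
have [m [hm Pm Hm]] := IH ex.
exists m; split => //; first by apply: ltn_trans hm _.
move=> j; rewrite ltnS leq_eqVlt => /orP [/eqP -> //|hj]; exact: Hm.
Qed.

Lemma max_exists (s : seq nat) :
  exists m, m \notin s /\ forall j, j \notin s -> g j <= g m.
Proof.
have [a Ha] := fresh_nat s.
have nas : a \notin s by apply/negP => /Ha; rewrite ltnn.
have [N HN] := gc0 (gpos a).
have aN : (a < N)%N by rewrite ltnNge; apply/negP => /HN; rewrite ltxx.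
have [m [hm Pm Hm]] := @argmax_fin (fun j => j \notin s) N (ex_intro _ a (conj aN nas)).
exists m; split => // j js.
have [jN|Nj] := ltnP j N; first exact: Hm.
exact: le_trans (ltW (HN _ Nj)) (Hm _ aN nas).
Qed.

Definition nxt (s : seq nat) : nat :=
  xget 0%N [set m | m \notin s /\ forall j, j \notin s -> g j <= g m].

Lemma nxtP s : nxt s \notin s /\ forall j, j \notin s -> g j <= g (nxt s).
Proof. exact: (xgetPex 0%N (max_exists s)). Qed.

Fixpoint L (n : nat) : seq nat := if n is n'.+1 then nxt (L n') :: L n' else [::].

Definition pi n := nxt (L n).

Lemma pi_in m n : (m < n)%N -> pi m \in L n.
Proof.
elim: n => [//|n IH]; rewrite ltnS leq_eqVlt => /orP [/eqP ->|h] /=.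
  by rewrite inE eqxx.
by rewrite inE IH ?orbT.
Qed.

Lemma in_L x n : x \in L n -> exists m, (m < n)%N /\ pi m = x.
Proof.
elim: n => [//|n IH] /=; rewrite inE => /orP [/eqP ->|/IH [m [hm <-]]].
  by exists n.
by exists m; split => //; apply: ltn_trans hm _.
Qed.

Lemma pi_inj : injective pi.
Proof.
have H : forall m n, (m < n)%N -> pi m <> pi n.
  move=> m n mn e; have := pi_in mn; rewrite e.
  by have [/negP ? _] := nxtP (L n).
move=> m n e; case: (ltngtP m n) => // h; first by have := H _ _ h.
by have := H _ _ h; rewrite e.
Qed.

Lemma pi_step n : g (pi n.+1) <= g (pi n).
Proof.
have [h1 _] := nxtP (L n.+1); have [_ h2] := nxtP (L n).
apply: h2; move: h1; rewrite /pi /= inE negb_or => /andP [_ //].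
Qed.

Lemma pi_surj i : exists n, pi n = i.
Proof.
have [//|nex] := pselect (exists n, pi n = i).
have notin : forall n, i \notin L n.
  move=> n; apply/negP => /in_L [m [_ e]]; apply: nex; by exists m.
have le : forall n, g i <= g (pi n) by move=> n; have [_ h] := nxtP (L n); exact: h.
have [N HN] := gc0 (gpos i).
have lt : forall n, (pi n < N)%N.
  move=> n; rewrite ltnNge; apply/negP => /HN h.
  by have := lt_le_trans h (le n); rewrite ltxx.
have : (size (map pi (iota 0 N.+1)) <= size (iota 0 N))%N.
  apply: uniq_leq_size; first by rewrite map_inj_uniq ?iota_uniq //; exact: pi_inj.
  by move=> x /mapP [n _ ->]; rewrite mem_iota add0n lt.
by rewrite size_map !size_iota ltnn.
Qed.

End Perm.

Section Main.
Variable R : realType.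
Notation seqR := (nat -> R).

Lemma equi_perm (x : seqR) (p : nat -> nat) : injective p -> (forall i, exists n, p n = i) ->
  equimeasurable (fun n => x (p n)) x.
Proof.
move=> inj sur lam _.
have -> : [set n | lam < `|x n|] = p @` [set n | lam < `|x (p n)|].
  apply/seteqP; split => n /=.
    by move=> h; have [m e] := sur n; exists m => //; rewrite e.
  by case=> m h <-.
rewrite card_eq_sym; apply: inj_card_eq => a b _ _; exact: inj.
Qed.

Lemma XsubCX (mem : seqR -> Prop) nrm x : ideal_property mem nrm ->
  cesaro_bounded mem nrm -> mem x -> mem (cesaro (absS x)).
Proof.
move=> hid [hb _] hx; apply: hb.
by apply: (hid _ x _ hx).1 => n; rewrite /absS normr_id.
Qed.

Lemma oc_X_CX (mem : seqR -> Prop) nrm : order_continuous mem nrm ->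
  order_continuous (CX_mem mem) (CX_norm nrm).
Proof.
move=> oc y ys hy hb hdec hpt e he.
apply: (oc (cesaro (absS y)) (fun k => cesaro (absS (ys k)))) => //.
- move=> k n; split; first by apply: cesaro_ge0 => j; exact: normr_ge0.
  rewrite ger0_norm; last by apply: cesaro_ge0 => j; exact: normr_ge0.
  apply: cesaro_mono => j; rewrite /absS (ger0_norm (hb k j).1); exact: (hb k j).2.
- move=> k n; apply: cesaro_mono => j.
  rewrite /absS (ger0_norm (hb k j).1) (ger0_norm (hb k.+1 j).1); exact: hdec.
- move=> n e' he'.
  have he2 : 0 < e' / 2 by rewrite divr_gt0.
  have [K HK] := unif_finite hpt n.+1 he2.
  exists K => k hk; apply: (@le_lt_trans _ _ (e' / 2)); last by lra.
  apply: cesaro_le_const => j hj; rewrite /absS (ger0_norm (hb k j).1).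
  exact: ltW (HK k hk j hj).
Qed.


Lemma sum_lb (K : nat) (e : R) : 0 <= e -> forall n,
  (n%:R - K%:R) * e <= \sum_(j < n) absS (fun n => if (K <= n)%N then e else 0) j.
Proof.
move=> he; elim=> [|n IH]; first by rewrite big_ord0 sub0r mulNr oppr_le0 mulr_ge0.
rewrite big_ord_recr /= /absS.
case: ifP => h.
  rewrite ger0_norm // -addn1 natrD.
  have -> : (n%:R + 1 - K%:R) * e = (n%:R - K%:R) * e + e by ring.
  by rewrite lerD2r.
rewrite normr0 addr0.
have : (n.+1%:R - K%:R) <= 0 :> R.
  by rewrite subr_le0 ler_nat leqNgt ltnS h.
move=> h0; apply: le_trans (_ : 0 <= _).
  by rewrite mulr_le0_ge0.
by apply: sumr_ge0 => i _; exact: normr_ge0.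
Qed.

Lemma not_c0 (mem : seqR -> Prop) nrm (y : seqR) (e : R) : ri_seq_space mem nrm ->
  cesaro_bounded mem nrm -> order_continuous (CX_mem mem) (CX_norm nrm) ->
  mem y -> 0 < e -> (forall N, exists n, (N <= n)%N /\ e <= `|y n|) -> False.
Proof.
move=> hri0 hbd oc hy he hinf.
case: hri0 => [[h0 [hadd [hscal [hnn [hz [hhom [htri hcomp]]]]]]] hid _ hri].
have e0 : 0 <= e := ltW he.
have he2 : 0 < e / 2 by rewrite divr_gt0.
have e20 : 0 <= e / 2 := ltW he2.
pose nx a := xget 0%N [set n | (a <= n)%N /\ e <= `|y n|].
have nxP a : (a <= nx a)%N /\ e <= `|y (nx a)| by apply: (xgetPex 0%N (hinf a)).
pose s := fix s (k : nat) : nat := if k is k'.+1 then nx (s k').+1 else nx 0%N.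
have sinc m n : (m < n)%N -> (s m < s n)%N.
  elim: n => [//|n IH]; rewrite ltnS leq_eqVlt => /orP [/eqP ->|h].
    exact: (nxP _).1.
  exact: ltn_trans (IH h) (nxP _).1.
have sinj : injective s.
  move=> m n E; case: (ltngtP m n) => // h; have := sinc _ _ h; by rewrite E ltnn.
pose z n := if pselect (exists k, s k = n) then e else 0.
have zE1 n : (exists k, s k = n) -> z n = e.
  by move=> H; rewrite /z; destruct (pselect (exists k, s k = n)).
have zE0 n : ~ (exists k, s k = n) -> z n = 0.
  by move=> H; rewrite /z; destruct (pselect (exists k, s k = n)).
have hzy n : `|z n| <= `|y n|.
  have [[k kn]|H] := pselect (exists k, s k = n); last by rewrite zE0 // normr0 normr_ge0.
  rewrite zE1; last by exists k.
  by rewrite -kn (ger0_norm (ltW he)); case: k {kn} => [|k] /=; exact: (nxP _).2.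
have mz : mem z := (hid _ _ hzy hy).1.
have mce : mem (fun _ => e).
  suff equi : equimeasurable (fun _ => e) z by exact: (hri _ _ mz equi).1.
  move=> lam hlam /=.
  have [hle|hge] := ltP lam e.
    have -> : [set _ : nat | lam < `|e|] = setT.
      by apply/seteqP; split => n //= _; rewrite ger0_norm ?e0 ?e20.
    have -> : [set n | lam < `|z n|] = s @` setT.
      apply/seteqP; split => n /=.
        have [[k kn] _|H] := pselect (exists k, s k = n); first by exists k.
        rewrite zE0 //.
        by rewrite normr0 => h; have := lt_trans hlam h; rewrite ltxx.
      by case=> k _ <-; rewrite zE1 ?ger0_norm ?e0 ?e20 //; exists k.
    rewrite card_eq_sym; apply: inj_card_eq => a b _ _; exact: sinj.
  have -> : [set _ : nat | lam < `|e|] = set0.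
    apply/seteqP; split => n //=; rewrite ger0_norm ?e0 ?e20 // => h.
    by have := lt_le_trans h hge; rewrite ltxx.
  have -> : [set n | lam < `|z n|] = set0.
    apply/seteqP; split => n //=; have [H|H] := pselect (exists k, s k = n);
      [rewrite zE1 // | rewrite zE0 //].
      by rewrite ger0_norm ?e0 ?e20 // => h; have := lt_le_trans h hge; rewrite ltxx.
    by rewrite normr0 => h; have := lt_trans hlam h; rewrite ltxx.
  exact: card_eq00.
have mc2 : mem (fun _ => e / 2).
  apply: (hid _ (fun _ => e) _ mce).1 => n.
  by rewrite (ger0_norm e0) (ger0_norm e20); lra.
have pc2 : 0 < nrm (fun _ => e / 2).
  rewrite lt_neqAle hnn // andbT; apply/eqP => /esym /(hz _ mc2) H.
  by have := congr1 (fun f => f 0%N) H => /= H2; rewrite H2 ltxx in he2.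
pose ys k n := if (k <= n)%N then e else 0.
have ysb k n : 0 <= ys k n /\ ys k n <= `|e|.
  by rewrite /ys (ger0_norm e0); case: ifP => _; rewrite ?lexx.
have hdec : forall k n, ys k.+1 n <= ys k n.
  move=> k n; rewrite /ys; case: ifP => h1; case: ifP => h2 //.
  by rewrite (ltnW h1) in h2.
have hpt : forall n (e' : R), 0 < e' -> exists K, forall k, (K <= k)%N -> ys k n < e'.
  move=> n e' he'; exists n.+1 => k hk; rewrite /ys.
  by have -> : (k <= n)%N = false by apply/negbTE; rewrite -ltnNge.
have [K HK] := oc (fun _ => e) ys (XsubCX hid hbd mce) ysb hdec hpt _ pc2.
have mysK : mem (ys K).
  apply: (hid _ (fun _ => e) _ mce).1 => n /=.
  by rewrite (ger0_norm (ysb K n).1); exact: (ysb K n).2.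
have memC := XsubCX hid hbd mysK.
pose w n := if (2 * K <= n)%N then e / 2 else 0.
have eqw : nrm w = nrm (fun _ => e / 2).
  suff equi : equimeasurable w (fun _ => e / 2) by exact: (hri _ _ mc2 equi).2.
  move=> lam hlam /=.
  have [hle|hge] := ltP lam (e / 2).
    have -> : [set _ : nat | lam < `|e / 2|] = setT.
      by apply/seteqP; split => n //= _; rewrite ger0_norm ?e0 ?e20.
    have -> : [set n | lam < `|w n|] = (fun n => n + 2 * K)%N @` setT.
      apply/seteqP; split => n /=.
        rewrite /w; case: ifP => h hl; last first.
          by move: hl; rewrite normr0 => h'; have := lt_trans hlam h'; rewrite ltxx.
        by exists (n - 2 * K)%N => //; rewrite subnK.
      case=> k _ <-; rewrite /w leq_addl ger0_norm ?e0 ?e20 //.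
    apply: inj_card_eq => a b _ _ /eqP; rewrite eqn_add2r => /eqP //.
  have -> : [set _ : nat | lam < `|e / 2|] = set0.
    apply/seteqP; split => n //=; rewrite ger0_norm ?e0 ?e20 // => h.
    by have := lt_le_trans h hge; rewrite ltxx.
  have -> : [set n | lam < `|w n|] = set0.
    apply/seteqP; split => n //=; rewrite /w; case: ifP => _.
      by rewrite ger0_norm ?e0 ?e20 // => h; have := lt_le_trans h hge; rewrite ltxx.
    by rewrite normr0 => h; have := lt_trans hlam h; rewrite ltxx.
  exact: card_eq00.
have : nrm w <= CX_norm nrm (ys K).
  apply: (hid w _ _ memC).2 => n.
  rewrite /w; case: ifP => h; last by rewrite normr0 normr_ge0.
  rewrite ger0_norm ?e0 ?e20 // ger0_norm; last by apply: cesaro_ge0 => j; exact: normr_ge0.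
  rewrite /cesaro ler_pdivlMl ?ltr0n //.
  apply: le_trans (sum_lb K (ltW he) n.+1).
  have : ((2 * K)%:R <= n%:R :> R) by rewrite ler_nat.
  rewrite natrM => hr.
  have hn : n.+1%:R = n%:R + 1 :> R by rewrite -addn1 natrD.
  rewrite hn.
  have hK : 0 <= K%:R :> R := ler0n _ _.
  nra.
rewrite eqw => H; have := lt_le_trans (HK K (leqnn K)) H.
by rewrite ltxx.
Qed.

Lemma mem_c0 (mem : seqR -> Prop) nrm (y : seqR) : ri_seq_space mem nrm ->
  cesaro_bounded mem nrm -> order_continuous (CX_mem mem) (CX_norm nrm) ->
  mem y -> forall e : R, 0 < e -> exists N, forall n, (N <= n)%N -> `|y n| < e.
Proof.
move=> hri hbd oc hy e he.
have [//|nex] := pselect (exists N, forall n, (N <= n)%N -> `|y n| < e).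
exfalso; apply: (not_c0 hri hbd oc hy he) => N.
have [//|nex2] := pselect (exists n, (N <= n)%N /\ e <= `|y n|).
exfalso; apply: nex; exists N => n hn.
have [//|hge] := ltP `|y n| e.
by exfalso; apply: nex2; exists n.
Qed.

Lemma oc_CX_X (mem : seqR -> Prop) nrm : ri_seq_space mem nrm ->
  cesaro_bounded mem nrm -> order_continuous (CX_mem mem) (CX_norm nrm) ->
  order_continuous mem nrm.
Proof.
move=> hri0 hbd oc y ys hy hb hdec hpt e he.
have c0y := mem_c0 hri0 hbd oc hy.
case: (hri0) => [[h0 [hadd [hscal [hnn [hz [hhom [htri hcomp]]]]]]] hid [x0 [hx0 hx0nz]] hri].
have c0x := mem_c0 hri0 hbd oc hx0.
pose g n := `|y n| + `|x0 n|.
have gpos n : 0 < g n.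
  have := normr_ge0 (y n); have : 0 < `|x0 n| by rewrite normr_gt0.
  rewrite /g; lra.
have gc0 : forall e : R, 0 < e -> exists N, forall n, (N <= n)%N -> g n < e.
  move=> e' he'; have he2 : 0 < e' / 2 by rewrite divr_gt0.
  have [N1 H1] := c0y _ he2; have [N2 H2] := c0x _ he2.
  exists (maxn N1 N2) => n hn.
  have := H1 n (leq_trans (leq_maxl _ _) hn); have := H2 n (leq_trans (leq_maxr _ _) hn).
  rewrite /g; lra.
have absm x : mem x -> mem (absS x).
  by move=> hx; apply: (hid _ x _ hx).1 => n; rewrite /absS normr_id.
have mg : mem g by exact: (hadd _ _ (absm _ hy) (absm _ hx0)).
pose p := pi g.
have pinj : injective p := pi_inj gpos gc0.
have psur : forall i, exists n, p n = i := pi_surj gpos gc0.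
pose G n := g (p n).
have mG : mem G := (hri G g mg (equi_perm g pinj psur)).1.
have Gdec n : G n.+1 <= G n := pi_step gpos gc0 n.
have Gpos n : 0 < G n := gpos _.
have ysg k m : ys k m <= g m.
  apply: le_trans (hb k m).2 _; rewrite /g; have := normr_ge0 (x0 m); lra.
have gG m : g m <= G 0%N.
  have [j <-] := psur m; exact: (noninc_le Gdec (leq0n j)).
have hub k : has_ubound (range (ys k)).
  by exists (G 0%N) => r [m _ <-]; exact: le_trans (ysg k m) (gG m).
pose c k := sup (range (ys k)).
have cub k m : ys k m <= c k.
  by apply: (ub_le_sup (hub k)); exists m.
have c0 k : 0 <= c k := le_trans (hb k 0%N).1 (cub k 0%N).
have cdec k : c k.+1 <= c k.
  apply: ge_sup; first by exists (ys k.+1 0%N); exists 0%N.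
  by move=> r [m _ <-]; exact: le_trans (hdec k m) (cub k m).
pose F k n := Order.min (G n) (c k).
have F0 k n : 0 <= F k n by rewrite /F le_min (ltW (Gpos n)) c0.
have FG k n : F k n <= G n by rewrite /F ge_min lexx.
have FC k n : F k n <= c k by rewrite /F ge_min lexx orbT.
have hbF k n : 0 <= F k n /\ F k n <= `|G n|.
  by split => //; rewrite (ger0_norm (ltW (Gpos n))).
have hdecF k n : F k.+1 n <= F k n.
  by rewrite /F le_min (FG k.+1 n) /= (le_trans (FC k.+1 n) (cdec k)).
have hptF n (e' : R) : 0 < e' -> exists K, forall k, (K <= k)%N -> F k n < e'.
  move=> he'; have he2 : 0 < e' / 2 by rewrite divr_gt0.
  have [N HN] := gc0 _ he2.
  have [K HK] := unif_finite hpt N he2.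
  exists K => k hk.
  have : c k <= e' / 2.
    apply: ge_sup; first by exists (ys k 0%N); exists 0%N.
    move=> r [m _ <-].
    have [mN|Nm] := ltnP m N; first exact: ltW (HK k hk m mN).
    exact: ltW (le_lt_trans (ysg k m) (HN m Nm)).
  have := FC k n; lra.
have mCG : CX_mem mem G := XsubCX hid hbd mG.
have [K HK] := oc G F mCG hbF hdecF hptF e he.
exists K => k hk; apply: le_lt_trans (HK k hk).
have mysk : mem (ys k).
  apply: (hid _ y _ hy).1 => n; rewrite (ger0_norm (hb k n).1); exact: (hb k n).2.
have [_ <-] := hri (fun n => ys k (p n)) (ys k) mysk (equi_perm (ys k) pinj psur).
have memC : mem (cesaro (absS (F k))).
  apply: (hid _ _ _ mCG).1 => n.
  rewrite !ger0_norm; try by apply: cesaro_ge0 => j; exact: normr_ge0.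
  apply: cesaro_mono => j; rewrite /absS (ger0_norm (F0 k j)) (ger0_norm (ltW (Gpos j))).
  exact: FG.
apply: (hid _ _ _ memC).2 => n.
rewrite (ger0_norm (hb k (p n)).1) ger0_norm; last by apply: cesaro_ge0 => j; exact: normr_ge0.
have noninc : forall m, absS (F k) m.+1 <= absS (F k) m.
  by move=> m; rewrite /absS !ger0_norm ?F0 // /F le_min ge_min Gdec /= ge_min lexx orbT.
apply: le_trans (cesaro_ge_noninc n noninc).
rewrite /absS ger0_norm ?F0 // /F le_min cub andbT.
exact: le_trans (ysg k (p n)) (lexx _).
Qed.

End Main.

Theorem corollary5p2 (R : realType) (mem : (nat -> R) -> Prop) (nrm : (nat -> R) -> R) :
  ri_seq_space mem nrm ->
  cesaro_bounded mem nrm ->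
  (order_continuous (CX_mem mem) (CX_norm nrm) <-> order_continuous mem nrm).
Proof.
move=> hri hbd; split; first exact: oc_CX_X.
exact: oc_X_CX.
Qed.
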